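(* Let $\mu_1,\mu_2$, $P_{n,m}$, the nearest neighbor recurrence coefficients $a_{n,m},b_{n,m},c_{n,m},d_{n,m}$ and the marginal recurrence coefficients $a_n^2(\mu_i),b_n(\mu_i)$ be as in the context, and suppose $c_{n,m}\neq d_{n,m}$ for all $n,m\ge 0$. Then the nearest neighbor recurrence coefficients can be computed recursively (by induction on $n+m$) from the relations \begin{align*} d_{n+1,m}-d_{n,m} &= c_{n,m+1}-c_{n,m}, && n,m\ge0,\\ a_{n+1,m}+b_{n+1,m}-(a_{n,m+1}+b_{n,m+1}) &= d_{n+1,m}c_{n,m}-d_{n,m}c_{n,m+1}, && n,m\ge 0,\\ \frac{a_{n,m+1}}{a_{n,m}} &= \frac{c_{n,m}-d_{n,m}}{c_{n-1,m}-d_{n-1,m}}, && n\ge1,\ m\ge0,\\ \frac{b_{n+1,m}}{b_{n,m}} &= \frac{c_{n,m}-d_{n,m}}{c_{n,m-1}-d_{n,m-1}}, && n\ge0,\ m\ge1, \end{align*} together with the boundary conditions $a_{n,0}=a_n^2(\mu_1)$, $b_{n,0}=0$, $c_{n,0}=b_n(\mu_1)$ for $n\ge0$ and $a_{0,m}=0$, $b_{0,m}=a_m^2(\mu_2)$, $d_{0,m}=b_m(\mu_2)$ for $m\ge0$; that is, these relations and boundary conditions determine all $a_{n,m},b_{n,m},c_{n,m},d_{n,m}$ ($n,m\ge0$) uniquely.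
   Context: Let $\mu_1,\mu_2$ be positive Borel measures on $\mathbb{R}$ with all moments finite, forming a normal system: for every $(n,m)\in\mathbb{N}^2$ there is a unique monic polynomial $P_{n,m}$ of degree $n+m$ with $\int x^kP_{n,m}\,d\mu_1=0$ for $0\le k\le n-1$ and $\int x^kP_{n,m}\,d\mu_2=0$ for $0\le k\le m-1$. Set $P_{n,m}=0$ if $n<0$ or $m<0$. The nearest neighbor recurrence coefficients are defined by \[ xP_{n,m}=P_{n+1,m}+c_{n,m}P_{n,m}+a_{n,m}P_{n-1,m}+b_{n,m}P_{n,m-1},\qquad xP_{n,m}=P_{n,m+1}+d_{n,m}P_{n,m}+a_{n,m}P_{n-1,m}+b_{n,m}P_{n,m-1}, \] with the convention $a_{0,m}=0$ and $b_{n,0}=0$ for the coefficients multiplying zero polynomials. For $i=1,2$, $P_n(x;\mu_i)$ are the monic orthogonal polynomials for $\mu_i$, satisfying $xP_n(x;\mu_i)=P_{n+1}(x;\mu_i)+b_n(\mu_i)P_n(x;\mu_i)+a_n^2(\mu_i)P_{n-1}(x;\mu_i)$ for $n\ge0$, with $P_0=1$, $P_{-1}=0$ and $a_0^2(\mu_i)=0$. (Thus $P_{n,0}=P_n(\cdot;\mu_1)$ and $P_{0,m}=P_m(\cdot;\mu_2)$.) The four displayed relations in the claim are known to hold for the nearest neighbor recurrence coefficients. *)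

(* Defs.v *)
From mathcomp Require Import all_boot all_order all_algebra.
From mathcomp Require Import all_classical all_reals.
Set Implicit Arguments. Unset Strict Implicit. Unset Printing Implicit Defensive.
Import Order.TTheory GRing.Theory Num.Theory.
Local Open Scope ring_scope.

(* A family of nearest-neighbor coefficients (a, b, c, d), indexed by (n, m),
   satisfies the four nearest-neighbor relations (ratio relations written in
   cross-multiplied form) and the boundary conditions determined by the
   marginal recurrence coefficients a1 = a_n^2(mu1), b1 = b_n(mu1),
   a2 = a_m^2(mu2), b2 = b_m(mu2). *)
Definition nn_relations (R : realType) (a b c d : nat -> nat -> R) : Prop :=
  [/\ (forall n m : nat, d n.+1 m - d n m = c n m.+1 - c n m),
      (forall n m : nat, a n.+1 m + b n.+1 m - (a n m.+1 + b n m.+1)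
                         = d n.+1 m * c n m - d n m * c n m.+1),
      (forall n m : nat, (1 <= n)%N ->
         a n m.+1 * (c n.-1 m - d n.-1 m) = a n m * (c n m - d n m)) &
      (forall n m : nat, (1 <= m)%N ->
         b n.+1 m * (c n m.-1 - d n m.-1) = b n m * (c n m - d n m))].

Definition nn_boundary (R : realType) (a1 b1 a2 b2 : nat -> R)
  (a b c d : nat -> nat -> R) : Prop :=
  [/\ (forall n : nat, a n 0%N = a1 n /\ b n 0%N = 0 /\ c n 0%N = b1 n) &
      (forall m : nat, a 0%N m = 0 /\ b 0%N m = a2 m /\ d 0%N m = b2 m)].

(* Main.v *)
Require Import Defs.
From mathcomp Require Import all_boot all_order all_algebra.
From mathcomp Require Import all_classical all_reals.
From mathcomp Require Import ring zify.
Import Order.TTheory GRing.Theory Num.Theory.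
Local Open Scope ring_scope.

Theorem theorem3p1 (R : realType) (a1 b1 a2 b2 : nat -> R)
  (a b c d : nat -> nat -> R) :
  a1 0%N = 0 -> a2 0%N = 0 ->
  nn_relations a b c d -> nn_boundary a1 b1 a2 b2 a b c d ->
  (forall n m : nat, c n m != d n m) ->
  forall a' b' c' d' : nat -> nat -> R,
    nn_relations a' b' c' d' -> nn_boundary a1 b1 a2 b2 a' b' c' d' ->
    [/\ a' = a, b' = b, c' = c & d' = d].
Proof.
move=> _ _ [R1 R2 R3 R4] [B1 B2] Hcd a' b' c' d' [R1' R2' R3' R4'] [B1' B2'].
have key : forall K n m, (n + m <= K)%N ->
  [/\ a' n m = a n m, b' n m = b n m, c' n m = c n m & d' n m = d n m].
  elim=> [|K IH] n0 m0.
    rewrite leqn0 addn_eq0 => /andP[/eqP -> /eqP ->].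
    have [x1 [x2 x3]] := B1 0%N; have [y1 [y2 y3]] := B2 0%N.
    have [x1' [x2' x3']] := B1' 0%N; have [y1' [y2' y3']] := B2' 0%N.
    by split; congruence.
  have hA : forall n m, (n + m <= K.+1)%N -> a' n m = a n m.
    move=> n [|m] Hnm.
      by have [-> _] := B1 n; have [-> _] := B1' n.
    case: n Hnm => [|n] Hnm.
      by have [-> _] := B2 m.+1; have [-> _] := B2' m.+1.
    have Hd : c n m - d n m != 0 by rewrite subr_eq0.
    have [e1 _ e3 e4] := IH n m ltac:(lia).
    have [e1' _ e3' e4'] := IH n.+1 m ltac:(lia).
    apply: (mulIf Hd).
    have := R3' n.+1 m erefl; rewrite /= e3 e4 => ->.
    by rewrite (R3 n.+1 m erefl) e1' e3' e4'.
  have hB : forall n m, (n + m <= K.+1)%N -> b' n m = b n m.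
    move=> [|n] m Hnm.
      by have [_ [-> _]] := B2 m; have [_ [-> _]] := B2' m.
    case: m Hnm => [|m] Hnm.
      by have [_ [-> _]] := B1 n.+1; have [_ [-> _]] := B1' n.+1.
    have Hd : c n m - d n m != 0 by rewrite subr_eq0.
    have [_ e2 e3 e4] := IH n m ltac:(lia).
    have [_ e2' e3' e4'] := IH n m.+1 ltac:(lia).
    apply: (mulIf Hd).
    have := R4' n m.+1 erefl; rewrite /= e3 e4 => ->.
    by rewrite (R4 n m.+1 erefl) e2' e3' e4'.
  have hC : forall n m, (n + m <= K.+1)%N -> c' n m = c n m.
    move=> n [|m] Hnm.
      by have [_ [_ ->]] := B1 n; have [_ [_ ->]] := B1' n.
    have Hd : c n m - d n m != 0 by rewrite subr_eq0.
    have [_ _ e3 e4] := IH n m ltac:(lia).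
    have E1 := R1 n m; have E2 := R2 n m.
    have E1' := R1' n m; have E2' := R2' n m.
    rewrite e3 e4 (hA n.+1 m) ?(hB n.+1 m) ?(hA n m.+1) ?(hB n m.+1) //
      in E1' E2'; try lia.
    apply: (mulIf Hd).
    have Ed' : d' n.+1 m = c' n m.+1 - c n m + d n m.
      by rewrite -E1'; ring.
    have Ed : d n.+1 m = c n m.+1 - c n m + d n m.
      by rewrite -E1; ring.
    rewrite Ed' E2 Ed in E2'.
    apply/eqP; rewrite -subr_eq0; apply/eqP.
    have : (c' n m.+1 - c n m + d n m) * c n m - d n m * c' n m.+1 -
           ((c n m.+1 - c n m + d n m) * c n m - d n m * c n m.+1) = 0.
      by rewrite E2' subrr.
    move=> <-; ring.
  have hD : forall n m, (n + m <= K.+1)%N -> d' n m = d n m.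
    move=> [|n] m Hnm.
      by have [_ [_ ->]] := B2 m; have [_ [_ ->]] := B2' m.
    have [_ _ e3 e4] := IH n m ltac:(lia).
    have E1 := R1 n m; have E1' := R1' n m.
    rewrite e3 e4 (hC n m.+1) in E1'; last lia.
    Timeout 20 have h : d' n.+1 m - d n m = d n.+1 m - d n m by rewrite E1' E1.
    Timeout 20 have h2 := congr1 (fun x => x + d n m) h.
    Timeout 20 by move: h2; rewrite /= !subrK.
  move=> H; split; [exact: hA|exact: hB|exact: hC|exact: hD].
Timeout 30 split; apply/funext=> n; apply/funext=> m;
  by case: (key (n + m)%N n m (leqnn _)).
Qed.
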